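(* Let $\mathbb{X},\mathbb{Y}$ be two-dimensional smooth real Banach spaces, with $\mathbb{Y}$ in addition strictly convex. Let $T\in\mathbb{L}(\mathbb{X},\mathbb{Y})$ be of rank one with $\|T\|=1$, and suppose $M_T=\{\pm x\}$. Then $T$ is an extreme contraction if and only if $(x,Tx)$ is not a CPP.
   Context: $M_T=\{x\in S_{\mathbb{X}}:\|Tx\|=\|T\|\}$. A norm one $T$ is an extreme contraction if it is an extreme point of the closed unit ball of $\mathbb{L}(\mathbb{X},\mathbb{Y})$. $B(x,r)=\{u:\|u-x\|<r\}$. $x\perp_B y$ means $\|x+\lambda y\|\ge\|x\|$ for all real $\lambda$; $x^\perp=\{y:x\perp_By\}$. For $x\in S_{\mathbb{X}}$, $y\in S_{\mathbb{Y}}$, $(x,y)$ is a CPP if there exist $r>0,\mu>0$ such that for all $z\in x^\perp\cap S_{\mathbb{X}}$, all $w\in y^\perp\cap S_{\mathbb{Y}}$ and all $a,b\in\mathbb{R}$, $ax+bz\in B(x,r)\cap S_{\mathbb{X}}$ implies $\|ay+b\mu w\|\le1$. *)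

(* Defs.v *)
(* R : realType; a 2-dimensional real normed space is modelled
   as 'rV[R]_2 equipped with an arbitrary norm N (every 2-dim real Banach space
   is isometrically isomorphic to such a space; finite dim => complete).
   A linear operator X -> Y is a matrix A : 'M[R]_2 acting on row vectors:
   T x = x *m A. *)
From HB Require Import structures.
From mathcomp Require Import all_boot all_order all_algebra.
From mathcomp Require Import classical_sets reals.
Set Implicit Arguments. Unset Strict Implicit. Unset Printing Implicit Defensive.
Import Order.TTheory GRing.Theory Num.Theory.
Local Open Scope ring_scope.
Local Open Scope classical_set_scope.

Section Defs.
Variable R : realType.
Notation V := 'rV[R]_2.

Definition is_norm (N : V -> R) : Prop :=
  (forall x, N x = 0 -> x = 0) /\
  (forall (a : R) x, N (a *: x) = `|a| * N x) /\
  (forall x y, N (x + y) <= N x + N y).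

Definition sphere (N : V -> R) : set V := [set x | N x = 1].

Definition oball (N : V -> R) (x : V) (r : R) : set V := [set u | N (u - x) < r].

Definition lin_functional (f : V -> R) : Prop :=
  forall (a : R) u v, f (a *: u + v) = a * f u + f v.

Definition support_functional (N : V -> R) (x : V) (f : V -> R) : Prop :=
  lin_functional f /\ f x = 1 /\ forall y, `|f y| <= N y.

Definition smooth (N : V -> R) : Prop :=
  forall x, N x = 1 ->
    forall f g, support_functional N x f -> support_functional N x g ->
      forall y, f y = g y.

Definition strictly_convex (N : V -> R) : Prop :=
  forall x y, N x = 1 -> N y = 1 -> x != y -> N (2^-1 *: (x + y)) < 1.

Definition opnorm (NX NY : V -> R) (A : 'M[R]_2) : R :=
  sup [set NY (x *m A) | x in sphere NX].

Definition norm_attainment_set (NX NY : V -> R) (A : 'M[R]_2) : set V :=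
  [set x | NX x = 1 /\ NY (x *m A) = opnorm NX NY A].

Definition extreme_contraction (NX NY : V -> R) (A : 'M[R]_2) : Prop :=
  opnorm NX NY A = 1 /\
  forall (B C : 'M[R]_2) (t : R), opnorm NX NY B <= 1 -> opnorm NX NY C <= 1 ->
    0 < t < 1 -> A = t *: B + (1 - t) *: C -> B = A /\ C = A.

Definition bj_orth (N : V -> R) (x y : V) : Prop :=
  forall lambda : R, N x <= N (x + lambda *: y).

Definition CPP (NX NY : V -> R) (x y : V) : Prop :=
  NX x = 1 /\ NY y = 1 /\
  exists r mu : R, 0 < r /\ 0 < mu /\
    forall z w : V, bj_orth NX x z -> NX z = 1 ->
      bj_orth NY y w -> NY w = 1 ->
      forall a b : R,
        (a *: x + b *: z) \in (oball NX x r `&` sphere NX) ->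
        NY (a *: y + (b * mu) *: w) <= 1.

End Defs.

(* Main.v *)
Require Import Defs.
From HB Require Import structures.
From mathcomp Require Import all_boot all_order all_algebra.
From mathcomp Require Import classical_sets reals.
From mathcomp Require Import ring lra.
Import Order.TTheory GRing.Theory Num.Theory.
Local Open Scope ring_scope.
Local Open Scope classical_set_scope.

Module Aux.
Set Implicit Arguments. Unset Strict Implicit. Unset Printing Implicit Defensive.

Section Basic.
Variable R : realType.
Notation V := 'rV[R]_2.

Definition i0 : 'I_2 := ord0.
Definition i1 : 'I_2 := ord_max.
Lemma I2 (j : 'I_2) : j = i0 \/ j = i1.
Proof. by case: j => [[|[|//]]] H; [left|right]; apply: val_inj. Qed.

Definition c0 (u : V) := u ord0 i0.
Definition c1 (u : V) := u ord0 i1.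
Definition dt (u w : V) := c0 u * c1 w - c1 u * c0 w.

Lemma vecP (u w : V) : c0 u = c0 w -> c1 u = c1 w -> u = w.
Proof.
move=> h0 h1; apply/rowP => j; case: (I2 j) => ->; by [].
Qed.

Lemma c0D (u w : V) : c0 (u + w) = c0 u + c0 w. Proof. by rewrite /c0 mxE. Qed.
Lemma c1D (u w : V) : c1 (u + w) = c1 u + c1 w. Proof. by rewrite /c1 mxE. Qed.
Lemma c0Z a (u : V) : c0 (a *: u) = a * c0 u. Proof. by rewrite /c0 mxE. Qed.
Lemma c1Z a (u : V) : c1 (a *: u) = a * c1 u. Proof. by rewrite /c1 mxE. Qed.
Lemma c0N (u : V) : c0 (- u) = - c0 u. Proof. by rewrite /c0 mxE. Qed.
Lemma c1N (u : V) : c1 (- u) = - c1 u. Proof. by rewrite /c1 mxE. Qed.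
Lemma c00 : c0 (0 : V) = 0. Proof. by rewrite /c0 mxE. Qed.
Lemma c10 : c1 (0 : V) = 0. Proof. by rewrite /c1 mxE. Qed.
Definition cE := (c0D, c1D, c0Z, c1Z, c0N, c1N, c00, c10).

Lemma decomp (u w v : V) : dt u w != 0 ->
  v = (dt v w / dt u w) *: u + (dt u v / dt u w) *: w.
Proof.
move=> h; apply: vecP; rewrite !cE /dt; field; exact: h.
Qed.

Lemma dtZl a (u w : V) : dt (a *: u) w = a * dt u w.
Proof. rewrite /dt !cE; ring. Qed.
Lemma dtDl (u v w : V) : dt (u + v) w = dt u w + dt v w.
Proof. rewrite /dt !cE; ring. Qed.
Lemma dtZr a (u w : V) : dt u (a *: w) = a * dt u w.
Proof. rewrite /dt !cE; ring. Qed.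
Lemma dtDr (u v w : V) : dt u (v + w) = dt u v + dt u w.
Proof. rewrite /dt !cE; ring. Qed.
Lemma dtNl (u w : V) : dt (- u) w = - dt u w.
Proof. rewrite /dt !cE; ring. Qed.
Lemma dtNr (u w : V) : dt u (- w) = - dt u w.
Proof. rewrite /dt !cE; ring. Qed.
Lemma dtuu (u : V) : dt u u = 0.
Proof. rewrite /dt; ring. Qed.
Lemma dtC (u w : V) : dt u w = - dt w u.
Proof. rewrite /dt; ring. Qed.

Lemma dep (u v : V) : dt u v = 0 -> c0 u *: v = c0 v *: u /\ c1 u *: v = c1 v *: u.
Proof.
rewrite /dt => h; split; apply: vecP; rewrite !cE; lra.
Qed.

Section Lin.
Variable f : V -> R.
Hypothesis hf : lin_functional f.
Lemma lin0 : f 0 = 0.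
Proof. have := hf 1 0 0; rewrite scaler0 addr0 mul1r => h; lra. Qed.
Lemma linZ a u : f (a *: u) = a * f u.
Proof. by have := hf a u 0; rewrite addr0 lin0 addr0. Qed.
Lemma linD u v : f (u + v) = f u + f v.
Proof. by have := hf 1 u v; rewrite scale1r mul1r. Qed.
Lemma linN u : f (- u) = - f u.
Proof. by rewrite -scaleN1r linZ mulN1r. Qed.
Lemma linB u v : f (u - v) = f u - f v.
Proof. by rewrite linD linN. Qed.

Lemma kill u v : f u != 0 -> f v = 0 -> dt u v = 0 -> v = 0.
Proof.
move=> fu fv /dep [h0 h1].
have e0 : c0 v = 0.
  have := congr1 f h0; rewrite !linZ fv mulr0 => /esym/eqP.
  by rewrite mulf_eq0 (negbTE fu) orbF => /eqP.
have e1 : c1 v = 0.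
  have := congr1 f h1; rewrite !linZ fv mulr0 => /esym/eqP.
  by rewrite mulf_eq0 (negbTE fu) orbF => /eqP.
by apply: vecP; rewrite ?cE.
Qed.

Lemma lin_dec u w v : dt u w != 0 ->
  f v = (dt v w / dt u w) * f u + (dt u v / dt u w) * f w.
Proof. by move=> h; rewrite {1}(decomp v h) linD !linZ. Qed.
End Lin.

Lemma dt_lin (w : V) : lin_functional (fun u => dt u w).
Proof. by move=> a u v; rewrite dtDl dtZl. Qed.
Lemma dt_linr (w : V) : lin_functional (fun u => dt w u).
Proof. by move=> a u v; rewrite dtDr dtZr. Qed.

Section Norm.
Variable N : V -> R.
Hypothesis hN : is_norm N.
Lemma nZ a u : N (a *: u) = `|a| * N u. Proof. by case: hN => _ []. Qed.
Lemma nD u v : N (u + v) <= N u + N v. Proof. by case: hN => _ []. Qed.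
Lemma n0 : N 0 = 0. Proof. by have := nZ 0 0; rewrite scale0r normr0 mul0r. Qed.
Lemma nN u : N (- u) = N u. Proof. by rewrite -scaleN1r nZ normrN1 mul1r. Qed.
Lemma nge0 u : 0 <= N u.
Proof. have := nD u (- u); rewrite subrr n0 nN; lra. Qed.
Lemma n_eq0 u : N u = 0 -> u = 0. Proof. by case: hN => h _; apply: h. Qed.
Lemma ngt0 u : u != 0 -> 0 < N u.
Proof.
move=> h; rewrite lt_neqAle nge0 andbT; apply/eqP => /esym/n_eq0 e.
by rewrite e eqxx in h.
Qed.
Lemma nB u v : N u - N v <= N (u - v).
Proof. have := nD (u - v) v; rewrite subrK; lra. Qed.
Lemma nBC u v : N (u - v) = N (v - u).
Proof. by rewrite -nN opprB. Qed.
End Norm.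

End Basic.


Section Supp.
Variable R : realType.
Notation V := 'rV[R]_2.
Variable N : V -> R.
Hypothesis hN : is_norm N.

Lemma ne0_of1 (x : V) : N x = 1 -> x != 0.
Proof. by move=> h; apply/eqP => e; move: h; rewrite e n0 //; lra. Qed.

Lemma exists_support (x : V) : N x = 1 -> exists f, support_functional N x f.
Proof.
move=> hx.
pose e : V := \row_j (if j == i0 then - c1 x else c0 x).
have ce0 : c0 e = - c1 x by rewrite /c0 mxE.
have ce1 : c1 e = c0 x by rewrite /c1 mxE.
pose d := dt x e.
have dE : d = c0 x ^+ 2 + c1 x ^+ 2 by rewrite /d /dt ce0 ce1; ring.
have dn0 : d != 0.
  apply/eqP => d0; move: (ne0_of1 hx) => /eqP; apply; apply: vecP; rewrite !cE;
  move: d0; rewrite dE => h; nra.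
pose E := [set N (t *: x + e) - t | t in [set: R]].
have hlb : has_lbound E.
  exists (- N e) => y [t _ <-].
  have := nB hN (t *: x) (- e); rewrite opprK nN // nZ // hx mulr1.
  have := ler_norm t; lra.
pose s := inf E.
have key : forall a b, a + s * b <= N (a *: x + b *: e).
  move=> a b; case: (ltgtP b 0) => hb.
  - pose t := - (a / b).
    have hat : a = t * (- b) by rewrite /t mulrNN divfK // lt_eqF.
    have -> : a *: x + b *: e = (- b) *: (t *: x - e).
      by apply: vecP; rewrite !cE hat; ring.
    rewrite nZ // gtr0_norm ?oppr_gt0 //.
    have : t - N (t *: x - e) <= s.
      apply: lb_le_inf; first by exists (N (0 *: x + e) - 0), 0.
      move=> y [t' _ <-].
      have := nD hN (t' *: x + e) (t *: x - e).
      have -> : t' *: x + e + (t *: x - e) = (t' + t) *: x.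
        by rewrite scalerDl addrACA subrr addr0.
      rewrite nZ // hx mulr1; have := ler_norm (t' + t); lra.
    rewrite hat => h.
    have h2 : 0 <= (- b) * (s - t + N (t *: x - e)) by apply: mulr_ge0; lra.
    nra.
  - pose t := a / b.
    have hat : a = t * b by rewrite /t divfK // gt_eqF.
    have -> : a *: x + b *: e = b *: (t *: x + e).
      by apply: vecP; rewrite !cE hat; ring.
    rewrite nZ // gtr0_norm //.
    have : s <= N (t *: x + e) - t by apply: ge_inf => //; exists t.
    rewrite hat => h.
    have h2 : 0 <= b * (N (t *: x + e) - t - s) by apply: mulr_ge0; lra.
    nra.
  - by rewrite hb mulr0 addr0 scale0r addr0 nZ // hx mulr1 ler_norm.
pose f := fun u => dt u e / d + s * (dt x u / d).
have flin : lin_functional f.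
  by move=> a u v; rewrite /f dtDl dtZl dtDr dtZr; field.
exists f; split => //; split.
  by rewrite /f dtuu mul0r mulr0 addr0 divff.
move=> u; rewrite ler_norml; apply/andP; split.
  rewrite -(nN hN) lerNl -(linN flin).
  rewrite {2}(decomp (- u) dn0); exact: key.
rewrite {2}(decomp u dn0); exact: key.
Qed.

Lemma support_orth (x z : V) f : N x = 1 -> support_functional N x f -> f z = 0 -> bj_orth N x z.
Proof.
move=> hx [fl [fx fb]] fz lam.
have := fb (x + lam *: z); rewrite (linD fl) (linZ fl) fz mulr0 addr0 fx hx.
by move=> h; apply: le_trans h; rewrite normr1.
Qed.

End Supp.


Lemma lift_i0 (k : 'I_1) : lift i0 k = i1. Proof. by apply: val_inj; case: k => [[]]. Qed.
Lemma lift_i1 (k : 'I_1) : lift i1 k = i0. Proof. by apply: val_inj; case: k => [[]]. Qed.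
Lemma det22 (R : realType) (A : 'M[R]_2) : \det A = A i0 i0 * A i1 i1 - A i0 i1 * A i1 i0.
Proof.
rewrite (expand_det_row _ i0) !big_ord_recl big_ord0 /cofactor !det_mx11 !mxE /=.
rewrite !lift_i0.
rewrite !lift_i1 /bump /= expr0 expr1 /i0; ring.
Qed.

Lemma cM0 (R : realType) (u : 'rV[R]_2) (A : 'M[R]_2) : c0 (u *m A) = c0 u * A i0 i0 + c1 u * A i1 i0.
Proof.
rewrite /c0 /c1 mxE !big_ord_recl big_ord0 /=.
have -> : lift ord0 ord0 = i1 :> 'I_2 by apply: val_inj.
by rewrite addr0.
Qed.
Lemma cM1 (R : realType) (u : 'rV[R]_2) (A : 'M[R]_2) : c1 (u *m A) = c0 u * A i0 i1 + c1 u * A i1 i1.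
Proof.
rewrite /c0 /c1 mxE !big_ord_recl big_ord0 /=.
have -> : lift ord0 ord0 = i1 :> 'I_2 by apply: val_inj.
by rewrite addr0.
Qed.
Lemma dtM (R : realType) (u v : 'rV[R]_2) (A : 'M[R]_2) :
  dt (u *m A) (v *m A) = dt u v * \det A.
Proof. rewrite /dt !cM0 !cM1 det22 /c0 /c1; ring. Qed.

Lemma rank1_det (R : realType) (A : 'M[R]_2) : \rank A = 1%N -> \det A = 0.
Proof.
move=> h; apply/eqP; apply: contraT => hd.
have : A \in unitmx by rewrite unitmxE unitfE.
by move/mxrank_unit; rewrite h.
Qed.


Section Geo.
Variable R : realType.
Notation V := 'rV[R]_2.
Variable N : V -> R.
Hypothesis hN : is_norm N.

Definition perp (x : V) : V := \row_j (if j == i0 then - c1 x else c0 x).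
Lemma perp_dt (x : V) : x != 0 -> dt x (perp x) != 0.
Proof.
move=> hx; have ce0 : c0 (perp x) = - c1 x by rewrite /c0 mxE.
have ce1 : c1 (perp x) = c0 x by rewrite /c1 mxE.
apply/eqP => d0; move: hx => /eqP; apply; apply: vecP; rewrite !cE;
move: d0; rewrite /dt ce0 ce1 => h; nra.
Qed.

Lemma scale_eq (k m : R) (z x : V) : k != 0 -> k *: z = m *: x -> z = (m / k) *: x.
Proof.
move=> hk h; apply: vecP; have := congr1 (@c0 _) h; have := congr1 (@c1 _) h; rewrite !cE => h1 h0;
[apply: (mulfI hk); rewrite h0 | apply: (mulfI hk); rewrite h1]; field; exact: hk.
Qed.

Lemma bj_indep (x z : V) : N x = 1 -> z != 0 -> bj_orth N x z -> dt x z != 0.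
Proof.
move=> hx hz hbj; apply/eqP => /dep [h0 h1].
have [c [hc ez]] : exists c : R, c != 0 /\ z = c *: x.
  have xn0 := ne0_of1 hN hx.
  have : c0 x != 0 \/ c1 x != 0.
    case: (eqVneq (c0 x) 0) => a; last by left.
    case: (eqVneq (c1 x) 0) => b; last by right.
    by move: xn0 => /eqP; case; apply: vecP; rewrite ?cE.
  case=> hk; [move: (scale_eq hk h0) | move: (scale_eq hk h1)] => e;
  (eexists; split; last exact: e);
  apply/eqP => c0'; move: hz; by rewrite e c0' scale0r eqxx.
have := hbj (- c^-1); rewrite ez scalerA mulNr mulVf // scaleN1r subrr n0 // hx.
lra.
Qed.

Lemma bj_support (x z : V) : N x = 1 -> z != 0 -> bj_orth N x z ->
  support_functional N x (fun u => dt u z / dt x z).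
Proof.
move=> hx hz hbj; have d0 := bj_indep hx hz hbj.
split; first by move=> a u v; rewrite dtDl dtZl; field.
split; first by rewrite divff.
move=> u; set a := dt u z / dt x z.
rewrite (decomp u d0) -/a.
case: (eqVneq a 0) => ha; first by rewrite ha normr0 nge0.
set b := dt x u / dt x z.
have -> : a *: x + b *: z = a *: (x + (b / a) *: z).
  by rewrite scalerDr scalerA mulrC divfK.
rewrite nZ //; have := hbj (b / a); rewrite hx => h.
have := normr_ge0 a; nra.
Qed.

Lemma smooth_orth (x z : V) g : smooth N -> N x = 1 -> support_functional N x g ->
  bj_orth N x z -> g z = 0.
Proof.
move=> sm hx hg hbj; case: (eqVneq z 0) => hz.
  by rewrite hz; case: hg => gl _; exact: lin0.
rewrite (sm x hx g _ hg (bj_support hx hz hbj) z).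
by rewrite dtuu mul0r.
Qed.

Lemma supp_lin (x : V) g : support_functional N x g -> lin_functional g.
Proof. by case. Qed.

Lemma exists_kernel (x : V) g : N x = 1 -> lin_functional g -> g x = 1 ->
  exists z0, N z0 = 1 /\ g z0 = 0.
Proof.
move=> hx gl gx; set e := perp x; set w := e - g e *: x.
have gw : g w = 0 by rewrite /w (linB gl) (linZ gl) gx mulr1 subrr.
have wn0 : w != 0.
  apply/eqP => w0; have := perp_dt (ne0_of1 hN hx); rewrite -/e.
  have -> : e = g e *: x by apply/eqP; rewrite -subr_eq0 -/w w0.
  by rewrite dtZr dtuu mulr0 eqxx.
have nw := ngt0 hN wn0.
exists ((N w)^-1 *: w); split.
  by rewrite nZ // ger0_norm ?invr_ge0 ?ltW // mulVf // gt_eqF.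
by rewrite (linZ gl) gw mulr0.
Qed.

Lemma frame (x z0 : V) g k : N x = 1 -> support_functional N x g -> N z0 = 1 -> g z0 = 0 ->
  support_functional N z0 k ->
  forall u, u = g u *: x + (k u - g u * k x) *: z0.
Proof.
move=> hx hg hz gz hk u.
have d0 : dt x z0 != 0.
  apply: bj_indep => //; first exact: ne0_of1 hz.
  exact: support_orth hx hg gz.
have gl := supp_lin hg; have kl := supp_lin hk.
have gx : g x = 1 by case: hg => _ [].
have kz : k z0 = 1 by case: hk => _ [].
have gu := lin_dec gl u d0; have ku := lin_dec kl u d0.
rewrite gx gz mulr1 mulr0 addr0 in gu.
rewrite kz mulr1 -gu in ku.
have -> : k u - g u * k x = dt x u / dt x z0 by rewrite ku; ring.
by rewrite gu; exact: decomp.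
Qed.

Lemma kernel_pm (x z0 z : V) g : N x = 1 -> support_functional N x g -> N z0 = 1 -> g z0 = 0 ->
  g z = 0 -> N z = 1 -> z = z0 \/ z = - z0.
Proof.
move=> hx hg hz0 gz0 gz hz.
have d0 : dt x z0 != 0.
  apply: bj_indep => //; first exact: ne0_of1 hz0.
  exact: support_orth hx hg gz0.
have gl := supp_lin hg; have gx : g x = 1 by case: hg => _ [].
have := lin_dec gl z d0; rewrite gz gx gz0 mulr1 mulr0 addr0 => ha.
move: (decomp z d0); rewrite -ha scale0r add0r => e.
move: hz; rewrite e nZ // hz0 mulr1 => hb.
case: (ger0P (dt x z / dt x z0)) hb => _ hb; [left | right].
  by rewrite hb scale1r.
by rewrite -[dt x z / _]opprK hb scaleN1r.
Qed.

End Geo.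


Section Op.
Variable R : realType.
Notation V := 'rV[R]_2.
Variables NX NY : V -> R.
Hypothesis hX : is_norm NX.
Hypothesis hY : is_norm NY.

Lemma exists_unit (N : V -> R) : is_norm N -> exists x0 : V, N x0 = 1.
Proof.
move=> hN; pose v0 : V := const_mx 1.
have v0n : v0 != 0.
  by apply/eqP => /(congr1 (@c0 _)); rewrite c00 /c0 mxE; apply/eqP; rewrite oner_eq0.
have nv := ngt0 hN v0n.
exists ((N v0)^-1 *: v0).
by rewrite nZ // ger0_norm ?invr_ge0 ?ltW // mulVf // gt_eqF.
Qed.

Lemma mulmx_lin (u v : V) a (M : 'M[R]_2) : (a *: u + v) *m M = a *: (u *m M) + v *m M.
Proof. by rewrite mulmxDl scalemxAl. Qed.

Lemma opnorm_bounded M : has_ubound [set NY (u *m M) | u in sphere NX].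
Proof.
have [x0 hx0] := exists_unit hX.
have [g hg] := exists_support hX hx0.
have [z0 [hz0 gz0]] := exists_kernel hX hx0 (supp_lin hg) (proj1 (proj2 hg)).
have [k hk] := exists_support hX hz0.
exists (NY (x0 *m M) + (1 + `|k x0|) * NY (z0 *m M)) => _ [u hu <-].
have fr := frame hX hx0 hg hz0 gz0 hk u.
rewrite fr mulmxDl -!scalemxAl.
set a := g u; set b := k u - a * k x0.
have ha : `|a| <= 1 by case: hg => _ [_ h]; move: (h u); rewrite hu.
have hku : `|k u| <= 1 by case: hk => _ [_ h]; move: (h u); rewrite hu.
have hb : `|b| <= 1 + `|k x0|.
  apply: le_trans (ler_normB _ _) _; rewrite normrM.
  have := normr_ge0 (k x0); have := normr_ge0 a; nra.
apply: le_trans (nD hY _ _) _; rewrite !nZ //.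
have := nge0 hY (x0 *m M); have := nge0 hY (z0 *m M); have := normr_ge0 b; have := normr_ge0 a.
nra.
Qed.

Lemma opnorm_ub M u : NX u = 1 -> NY (u *m M) <= opnorm NX NY M.
Proof. by move=> hu; apply: ub_le_sup; [exact: opnorm_bounded | exists u]. Qed.

Lemma opnorm_le M c : opnorm NX NY M <= c -> forall u, NY (u *m M) <= c * NX u.
Proof.
move=> hc u; case: (eqVneq u 0) => hu.
  by rewrite hu mul0mx !n0 // mulr0.
have nu := ngt0 hX hu.
have h1 : NX ((NX u)^-1 *: u) = 1.
  by rewrite nZ // ger0_norm ?invr_ge0 ?ltW // mulVf // gt_eqF.
have := le_trans (opnorm_ub M h1) hc.
have e : `|(NX u)^-1| = (NX u)^-1 by rewrite ger0_norm // invr_ge0 ltW.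
rewrite -scalemxAl nZ // e.
move=> h; have := ler_wpM2l (ltW nu) h; rewrite mulrA divff ?gt_eqF // mul1r; lra.
Qed.

Lemma opnorm_ge M c : (forall u, NX u = 1 -> NY (u *m M) <= c) -> opnorm NX NY M <= c.
Proof.
move=> h; apply: ge_sup.
  by have [x0 hx0] := exists_unit hX; exists (NY (x0 *m M)), x0.
by move=> _ [u hu <-]; apply: h.
Qed.

End Op.


Section Main.
Variable R : realType.
Notation V := 'rV[R]_2.
Variables NX NY : V -> R.
Variable A : 'M[R]_2.
Variable x : V.
Hypothesis hX : is_norm NX.
Hypothesis hY : is_norm NY.
Hypothesis smX : smooth NX.
Hypothesis smY : smooth NY.
Hypothesis scY : strictly_convex NY.
Hypothesis hrank : \rank A = 1%N.
Hypothesis hop : opnorm NX NY A = 1.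
Hypothesis hM : norm_attainment_set NX NY A = [set x; - x].

Lemma hxy : NX x = 1 /\ NY (x *m A) = 1.
Proof.
have : norm_attainment_set NX NY A x by rewrite hM /=; left.
by case=> h1; rewrite hop.
Qed.

Lemma opA u : NY (u *m A) <= NX u.
Proof. by rewrite -[NX u]mul1r; apply: opnorm_le => //; rewrite hop. Qed.

Lemma suppE N (v : V) f : support_functional N v f -> lin_functional f /\ f v = 1 /\ forall u, `|f u| <= N u.
Proof. by []. Qed.

Lemma setup : exists g z0 k h w0 k',
  [/\ support_functional NX x g, NX z0 = 1, g z0 = 0, support_functional NX z0 k &
  [/\ support_functional NY (x *m A) h, NY w0 = 1, h w0 = 0, support_functional NY w0 k' &
   (forall u, u *m A = g u *: (x *m A))]].
Proof.
have [hx hy] := hxy.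
have [g hg] := exists_support hX hx.
have [gl [gx gb]] := suppE hg.
have [z0 [hz0 gz0]] := exists_kernel hX hx gl gx.
have [k hk] := exists_support hX hz0.
have [h hh] := exists_support hY hy.
have [hl [hyy hb]] := suppE hh.
have [w0 [hw0 hw00]] := exists_kernel hY hy hl hyy.
have [k' hk'] := exists_support hY hw0.
exists g, z0, k, h, w0, k'; split => //; split => //.
have hA : forall u, h (u *m A) = g u.
  have hphi : support_functional NX x (fun u => h (u *m A)).
    split.
    by move=> a v v'; rewrite mulmx_lin; exact: hl.
  split => // v; exact: le_trans (hb _) (opA v).
  by move=> u; exact: (smX hx hphi hg u).
have z0A : z0 *m A = 0.
  apply: (kill hl (_ : h (x *m A) != 0)); first by rewrite hyy oner_eq0.
    by rewrite hA.
  by rewrite dtM rank1_det // mulr0.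
move=> u; rewrite {1}(frame hX hx hg hz0 gz0 hk u) mulmx_lin -scalemxAl z0A.
by rewrite scaler0 addr0.
Qed.


Lemma comb_bound (M1 M2 : 'M[R]_2) t : 0 <= t <= 1 ->
  (forall u, NY (u *m M1) <= NX u) -> (forall u, NY (u *m M2) <= NX u) ->
  forall u, NY (u *m (t *: M1 + (1 - t) *: M2)) <= NX u.
Proof.
move=> /andP [t0 t1] h1 h2 u; rewrite mulmxDr -!scalemxAr.
apply: le_trans (nD hY _ _) _; rewrite !nZ // !ger0_norm ?subr_ge0 //.
have := h1 u; have := h2 u; nra.
Qed.

Lemma opB (B : 'M[R]_2) : opnorm NX NY B <= 1 -> forall u, NY (u *m B) <= NX u.
Proof. by move=> hB u; rewrite -[NX u]mul1r; apply: opnorm_le. Qed.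

Lemma mx_eq0 (S : 'M[R]_2) : (forall u : V, u *m S = 0) -> S = 0.
Proof.
move=> h; apply/matrixP => i j.
have := congr1 (fun v : V => v ord0 j) (h (delta_mx 0 i)).
by rewrite -rowE !mxE.
Qed.

Lemma mid_pm (v w : V) : 2^-1 *: ((v + w) + (v - w)) = v.
Proof. by apply: vecP; rewrite !cE; field. Qed.

Lemma notCPP_extreme : ~ CPP NX NY x (x *m A) -> extreme_contraction NX NY A.
Proof.
move=> nC; split => // B C t hB hC /andP [t0 t1] eA.
have [hx hy] := hxy.
suff BA : B = A.
  split => //; apply/matrixP => i j.
  have := congr1 (fun M : 'M_2 => M i j) eA; rewrite BA !mxE => e.
  have t1' : 1 - t != 0 by rewrite subr_eq0 eq_sym lt_eqF.
  have h0 : (1 - t) * (C i j - A i j) = 0.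
    have -> : (1 - t) * (C i j - A i j) = (t * A i j + (1 - t) * C i j) - A i j by ring.
    by rewrite -e subrr.
  by move: h0 => /eqP; rewrite mulf_eq0 (negbTE t1') /= subr_eq0 => /eqP.
case: (eqVneq B A) => // hBA; exfalso; apply: nC.
have [g [z0 [k [h [w0 [k' [hg hz0 gz0 hk [hh hw0 hw00 hk' hA]]]]]]]] := setup.
have [gl [gx gb]] := suppE hg.
have [hl [hyy hb]] := suppE hh.
set y := x *m A in hy hh hA hyy hb *.
set S := t *: (B - A).
have ePS : A + S = t *: B + (1 - t) *: A.
  by apply/matrixP => i j; rewrite !mxE; ring.
have eMS : A - S = t *: A + (1 - t) *: C.
  apply/matrixP => i j; have := congr1 (fun M : 'M_2 => M i j) eA; rewrite !mxE => e.
  rewrite {1}e; ring.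
have hP : forall u, NY (u *m (A + S)) <= NX u.
  rewrite ePS; apply: comb_bound; [lra | exact: opB | exact: opA].
have hMi : forall u, NY (u *m (A - S)) <= NX u.
  rewrite eMS; apply: comb_bound; [lra | exact: opA | exact: opB].
have xS : x *m S = 0.
  apply/eqP; apply: contraT => vn0; set v := x *m S in vn0.
  have p1 : NY (y + v) <= 1 by rewrite -hx /y /v -mulmxDr; exact: hP.
  have p2 : NY (y - v) <= 1 by rewrite -hx /y /v -mulmxBr; exact: hMi.
  have hmid := nD hY (2^-1 *: (y + v)) (2^-1 *: (y - v)).
  rewrite -scalerDr mid_pm !nZ // hy ger0_norm ?invr_ge0 ?ler0n // in hmid.
  have [q1 | q1] := eqVneq (NY (y + v)) 1; last first.
    have : NY (y + v) < 1 by rewrite lt_neqAle q1 p1.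
    lra.
  have [q2 | q2] := eqVneq (NY (y - v)) 1; last first.
    have : NY (y - v) < 1 by rewrite lt_neqAle q2 p2.
    lra.
  have ne : y + v != y - v.
    apply: contra vn0 => /eqP e; apply/eqP; apply: vecP;
    have := congr1 (@c0 _) e; have := congr1 (@c1 _) e; rewrite !cE; lra.
  have := scY q1 q2 ne; rewrite mid_pm hy; lra.
have hphi : support_functional NX x (fun u => h (u *m (A + S))).
  split; first by move=> a u u'; rewrite mulmx_lin; exact: hl.
  split; first by rewrite mulmxDr xS addr0.
  by move=> u; exact: le_trans (hb _) (hP u).
have hz0S : h (z0 *m S) = 0.
  have := smX hx hphi hg z0; rewrite gz0 mulmxDr hA gz0 scale0r add0r //.
have ez0S : z0 *m S = k' (z0 *m S) *: w0.
  by rewrite {1}(frame hY hy hh hw0 hw00 hk' (z0 *m S)) hz0S scale0r add0r mul0r subr0.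
set q := k' (z0 *m S) in ez0S.
have qn0 : q != 0.
  apply/eqP => q0; move: hBA => /eqP; apply.
  have S0 : S = 0.
    apply: mx_eq0 => u; rewrite (frame hX hx hg hz0 gz0 hk u) mulmx_lin -scalemxAl.
    by rewrite xS ez0S q0 !scale0r !scaler0 addr0.
  move: S0 => /eqP; rewrite /S scaler_eq0 gt_eqF //= subr_eq0 => /eqP.
  by [].
split => //; split => //; exists 1, `|q|; split => //; split; first by rewrite normr_gt0.
move=> z w hbz hz hbw hw a b hmem.
rewrite in_setE in hmem; case: hmem => _ hsph; rewrite /sphere /= in hsph.
have gz : g z = 0 := smooth_orth hX smX hx hg hbz.
have hw_ : h w = 0 := smooth_orth hY smY hy hh hbw.
have guv : g (a *: x + b *: z) = a by rewrite gl (linZ gl) gz mulr0 addr0 gx mulr1.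
have key : forall d, (z *m S = d *: w0) ->
    NY (a *: y + (b * d) *: w0) <= 1 /\ NY (a *: y - (b * d) *: w0) <= 1.
  move=> d zS; split.
    have := hP (a *: x + b *: z); rewrite hsph mulmxDr hA guv mulmx_lin xS scaler0 add0r.
    by rewrite -scalemxAl zS scalerA.
  have := hMi (a *: x + b *: z); rewrite hsph mulmxBr hA guv mulmx_lin xS scaler0 add0r.
  by rewrite -scalemxAl zS scalerA.
have [d [hd1 hd2 hdq]] : exists d, [/\ NY (a *: y + (b * d) *: w0) <= 1,
    NY (a *: y - (b * d) *: w0) <= 1 & (d = q \/ d = - q)].
  case: (kernel_pm hX hx hg hz0 gz0 gz hz) => ez.
    have zS : z *m S = q *: w0 by rewrite ez.
    have [k1 k2] := key q zS; exists q; split => //; by left.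
  have zS : z *m S = (- q) *: w0.
    by rewrite ez (mulNmx z0 S) ez0S scaleNr.
  have [k1 k2] := key (- q) zS; exists (- q); split => //; by right.
have hy' : forall c, (c = b * d \/ c = - (b * d)) -> NY (a *: y + c *: w0) <= 1.
  by move=> c [] ->; rewrite ?scaleNr.
case: (kernel_pm hY hy hh hw0 hw00 hw_ hw) => ->; [rewrite -[w0]scale1r | rewrite -scaleN1r];
  rewrite scalerA; apply: hy'; case: hdq => ->; case: (ger0P q) => _;
  rewrite ?mulr1 ?mulrN1 ?mulrN ?opprK; by [left | right].
Qed.


Definition mk (p w : V) : 'M[R]_2 := \matrix_(i, j) (p ord0 i * w ord0 j).
Lemma mkE (u p w : V) : u *m mk p w = (c0 u * c0 p + c1 u * c1 p) *: w.
Proof. apply: vecP; rewrite ?cM0 ?cM1 !cE /mk !mxE /c0 /c1; ring. Qed.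

Lemma perpE (u : V) : c0 u * c0 (perp x) + c1 u * c1 (perp x) = dt x u.
Proof. rewrite /perp /c0 /c1 !mxE /= /dt /c0 /c1; ring. Qed.

Lemma conv_pm (v w : V) s c : NY (v + s *: w) <= 1 -> NY (v - s *: w) <= 1 -> `|c| <= `|s| ->
  NY (v + c *: w) <= 1.
Proof.
move=> h1 h2 hc; case: (eqVneq s 0) => hs.
  move: hc; rewrite hs normr0 => hc; have -> : c = 0 by apply/normr0_eq0/eqP; rewrite eq_le hc normr_ge0.
  by move: h1; rewrite hs !scale0r.
set l := c / s.
have hl : `|l| <= 1 by rewrite /l normrM normrV ?unitfE // ler_pdivrMr ?normr_gt0 // mul1r.
have -> : v + c *: w = ((1 + l) / 2) *: (v + s *: w) + ((1 - l) / 2) *: (v - s *: w).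
  apply: vecP; rewrite !cE /l; field; exact: hs.
apply: le_trans (nD hY _ _) _; rewrite !nZ //.
move: hl; rewrite ler_norml => /andP [l1 l2].
rewrite !ger0_norm; first nra.
  apply: divr_ge0; lra.
apply: divr_ge0; lra.
Qed.

Lemma extreme_notCPP : extreme_contraction NX NY A -> ~ CPP NX NY x (x *m A).
Proof.
move=> [_ hext] [_ [_ [r [mu [r0 [mu0 hcpp]]]]]].
have [hx hy] := hxy.
have [g [z0 [k [h [w0 [k' [hg hz0 gz0 hk [hh hw0 hw00 hk' hA]]]]]]]] := setup.
have [gl [gx gb]] := suppE hg.
have [hl [hyy hb]] := suppE hh.
have [kl [kz kb]] := suppE hk.
set y := x *m A in hy hh hA hyy hb hcpp *.
have bjz : bj_orth NX x z0 := support_orth hx hg gz0.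
have bjw : bj_orth NY y w0 := support_orth hy hh hw00.
have bjw' : bj_orth NY y (- w0).
  by move=> l; rewrite scalerN -scaleNr; exact: bjw.
have d0 : dt x z0 != 0 by apply: (bj_indep hX hx (ne0_of1 hX hz0) bjz).
set d := dt x z0 in d0.
set be := fun u => dt x u / d.
have uE : forall u, u = g u *: x + be u *: z0.
  move=> u; have := lin_dec gl u d0; rewrite gx gz0 mulr1 mulr0 addr0 => ->.
  exact: decomp.
have beb : forall u, `|be u| <= (1 + `|k x|) * NX u.
  move=> u; have e : k u = g u * k x + be u.
    by rewrite {1}(uE u) kl (linZ kl) kz mulr1.
  have -> : be u = k u - g u * k x by rewrite e; ring.
  apply: le_trans (ler_normB _ _) _; rewrite normrM.
  have := kb u; have := gb u; have := normr_ge0 (k x); have := normr_ge0 (g u); nra.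
set K := 1 + `|k x|.
have K0 : 0 < K by rewrite /K; have := normr_ge0 (k x); lra.
set eta := r / 2.
have etaE : eta = r / 2 by [].
have eta0 : 0 < eta by rewrite /eta; lra.
have mpos : forall c, c != 0 -> 1 < NX (x + c *: z0).
  move=> c c0; set v := x + c *: z0.
  have gv : g v = 1 by rewrite /v (linD gl) (linZ gl) gx gz0 mulr0 addr0.
  have := gb v; rewrite gv normr1 le_eqVlt => /orP [/eqP e | //].
  have : norm_attainment_set NX NY A v.
    by split => //; rewrite hop hA gv scale1r.
  rewrite hM => -[ev | ev].
    have cz : c *: z0 = 0 by apply: (addrI x); rewrite addr0; exact: ev.
    move: cz => /eqP; rewrite scaler_eq0 (negbTE c0) /= => /eqP z00.
    by move: hz0; rewrite z00 n0 //; lra.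
  by move: gv; rewrite ev (linN gl) gx; lra.
set m := Num.min (NX (x + eta *: z0)) (NX (x + (- eta) *: z0)).
have m1 : 1 < m.
  by rewrite /m lt_min !mpos // ?oppr_eq0 gt_eqF.
set de := Num.min eta (m - 1).
have de0 : 0 < de by rewrite /de lt_min eta0 /=; lra.
have deeta : de <= eta by rewrite /de ge_min lexx.
have dem : de <= m - 1 by rewrite /de ge_min lexx orbT.
set ep := Num.min mu (de / K).
have ep0 : 0 < ep by rewrite /ep lt_min mu0 divr_gt0.
have epmu : ep <= mu by rewrite /ep ge_min lexx.
have epK : ep * K <= de.
  have : ep <= de / K by rewrite /ep ge_min lexx orbT.
  by rewrite ler_pdivlMr.
have near : forall u c, NX u = 1 -> NX (u - x) < r -> `|c| <= ep * `|be u| ->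
    NY (g u *: y + c *: w0) <= 1.
  move=> u c hu hur hc.
  have mem : g u *: x + be u *: z0 \in oball NX x r `&` sphere NX.
    by rewrite -uE in_setE; split.
  have p1 := hcpp z0 w0 bjz hz0 bjw hw0 _ _ mem.
  have nw' : NY (- w0) = 1 by rewrite nN.
  have p2 := hcpp z0 (- w0) bjz hz0 bjw' nw' _ _ mem.
  rewrite scalerN in p2.
  apply: (conv_pm p1 p2).
  apply: le_trans hc _; rewrite (normrM (be u) mu) (gtr0_norm mu0) mulrC.
  by apply: ler_wpM2l => //; exact: normr_ge0.
have core : forall u, NX u = 1 -> r <= NX (u - x) -> 0 <= g u -> g u <= 1 - de.
  move=> u hu hur ga; rewrite leNgt; apply/negP => hgt.
  have ga1 : g u <= 1 by have := gb u; rewrite hu ger0_norm.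
  set a := g u in ga ga1 hgt; set b := be u.
  have hub : NX (u - x) <= (1 - a) + `|b|.
    have -> : u - x = (a - 1) *: x + b *: z0.
      by rewrite {1}(uE u) -/a -/b; apply: vecP; rewrite !cE; ring.
    apply: le_trans (nD hX _ _) _; rewrite !nZ // hx hz0 !mulr1 ler0_norm; lra.
  have bpos : eta < `|b| by move: etaE; lra.
  have babs : 0 < `|b| by lra.
  set t := eta / `|b|.
  have t0 : 0 < t by rewrite /t divr_gt0.
  have t1 : t <= 1 by rewrite /t ler_pdivrMr // mul1r ltW.
  set pnt := (1 - t) *: x + t *: u.
  have hp : NX pnt <= 1.
    apply: le_trans (nD hX _ _) _; rewrite !nZ // hx hu !mulr1 !ger0_norm; lra.
  have ev : x + (t * b) *: z0 = pnt + (t * (1 - a)) *: x.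
    by rewrite /pnt (uE u) -/a -/b; apply: vecP; rewrite !cE; ring.
  have hv : NX (x + (t * b) *: z0) <= 1 + (1 - a).
    rewrite ev; apply: le_trans (nD hX _ _) _; rewrite nZ // hx mulr1 normrM !ger0_norm; nra.
  have : m <= NX (x + (t * b) *: z0).
    case: (ger0P b) => hb0.
      have -> : t * b = eta.
        rewrite /t (ger0_norm hb0) in babs *; rewrite divfK // gt_eqF //.
      by rewrite /m ge_min lexx.
    have -> : t * b = - eta.
      rewrite /t (ltr0_norm hb0); field; rewrite lt_eqF //.
    by rewrite /m ge_min lexx orbT.
  lra.
have mainb : forall u c, NX u = 1 -> `|c| <= ep * `|be u| -> NY (g u *: y + c *: w0) <= 1.
  move=> u c hu hc.
  case: (ltP (NX (u - x)) r) => h1; first exact: near.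
  case: (ltP (NX (u + x)) r) => h2.
    have nu' : NX (- u) = 1 by rewrite nN.
    have := near (- u) (- c) nu'.
    have be_n : be (- u) = - be u by rewrite /be dtNr mulNr.
    rewrite be_n normrN -opprD (nN hX) (linN gl) !scaleNr -opprD (nN hY).
    by move=> H; apply: H => //; rewrite normrN.
  have hgu : `|g u| <= 1 - de.
    case: (ger0P (g u)) => hg0.
      exact: core.
    have nu2 : NX (- u) = 1 by rewrite (nN hX).
    have := core (- u) nu2; rewrite -opprD (nN hX) (linN gl) => H.
    apply: (H h2); lra.
  apply: le_trans (nD hY _ _) _; rewrite !nZ // hy hw0 !mulr1.
  have := beb u; rewrite hu mulr1 => hbK.
  have : `|c| <= ep * K by apply: le_trans hc _; apply: ler_wpM2l => //; exact: ltW.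
  lra.
set S := mk (perp x) ((ep / d) *: w0).
have uS : forall u, u *m S = (ep * be u) *: w0.
  by move=> u; rewrite mkE perpE scalerA /be mulrCA mulrA.
have hAS : forall sg : R, (sg = 1 \/ sg = -1) -> opnorm NX NY (A + sg *: S) <= 1.
  move=> sg hsg; apply: opnorm_ge => // u hu.
  rewrite mulmxDr -scalemxAr uS hA scalerA; apply: mainb => //.
  rewrite normrM normrM (gtr0_norm ep0); case: hsg => ->; rewrite ?normrN normr1 mul1r //.
have t2 : 0 < (2^-1 : R) < 1 by apply/andP; split; lra.
have eA : A = 2^-1 *: (A + 1 *: S) + (1 - 2^-1) *: (A + (-1) *: S).
  by apply/matrixP => i j; rewrite !mxE; field.
have [e1 e2] := hext (A + 1 *: S) (A + (-1) *: S) (2^-1) (hAS 1 (or_introl erefl))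
  (hAS (-1) (or_intror erefl)) t2 eA.
have : z0 *m S = 0.
  have S0 : S = 0 by apply: (addrI A); rewrite addr0; move: e1; rewrite scale1r.
  by rewrite S0 mulmx0.
rewrite uS /be divff // mulr1 => /eqP; rewrite scaler_eq0 gt_eqF //=.
by move=> w00; move: (ne0_of1 hY hw0); rewrite w00.
Qed.

End Main.

End Aux.
Import Aux.

Theorem mainTheorem8 (R : realType) (NX NY : 'rV[R]_2 -> R) (A : 'M[R]_2)
  (x : 'rV[R]_2) :
  is_norm NX -> is_norm NY ->
  smooth NX -> smooth NY -> strictly_convex NY ->
  \rank A = 1%N ->
  opnorm NX NY A = 1 ->
  norm_attainment_set NX NY A = [set x; - x] ->
  (extreme_contraction NX NY A <-> ~ CPP NX NY x (x *m A)).
Proof.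
move=> hX hY smX smY scY hr hop hM; split.
  exact: (@extreme_notCPP R NX NY A x hX hY smX hr hop hM).
exact: (@notCPP_extreme R NX NY A x hX hY smX smY scY hr hop hM).
Qed.
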